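(* For every $m\geq1$, the invariant subring $\mathcal{K}(m)^{\mathfrak{S}_3}$ is generated by \[ \{z(i,I)\mid 1\leq i\leq 6,\ I\subset \{1,\dots, m\},\ |I|\leq 3\}. \]
   Context: Let $J=(x+y+w,\ x^2+y^2+w^2,\ x^6+y^6+w^6)\subset\mathbb{Q}[x,y,w]$ with $x,y,w$ of degree 2, and let $\mathcal{K}(m)=\mathbb{Q}[x,y,w]/J\otimes\bigotimes_{j=1}^m\Lambda(\alpha_j,\beta_j,\gamma_j)/(\alpha_j+\beta_j+\gamma_j)$ with $\alpha_j,\beta_j,\gamma_j$ of degree 1 (this is $H^*(G_2/T\times T^m;\mathbb{Q})$ for $T$ a maximal torus of $SU(3)\subset G_2$). The symmetric group $\mathfrak{S}_3$ (the Weyl group of $SU(3)$) acts on $\mathcal{K}(m)$ by permuting $x,y,w$ and simultaneously permuting each triple $(\alpha_j,\beta_j,\gamma_j)$ in the same way. For $I=\{i_1<\dots<i_k\}$ put $\alpha_I=\alpha_{i_1}\cdots\alpha_{i_k}$ ($\alpha_\emptyset=1$), similarly $\beta_I,\gamma_I$, and for $d\ge0$ put $z(d+1,I)=x^d\alpha_I+y^d\beta_I+w^d\gamma_I$. *)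

(* Defs.v *)
(* K(m) is modelled by its presentation: the free
   (non-commutative) Q-algebra on generators x,y,w (even) and
   alpha_j,beta_j,gamma_j (odd), modulo the congruence generated by the
   Q-algebra axioms, graded commutativity (even generators central, odd
   generators anticommute and square to zero), the ideal J and the
   relations alpha_j+beta_j+gamma_j = 0. *)
From mathcomp Require Import all_boot all_order all_algebra all_fingroup.
Set Implicit Arguments. Unset Strict Implicit. Unset Printing Implicit Defensive.
Import GRing.Theory.
Local Open Scope ring_scope.

(* Even generators: index 0 = x, 1 = y, 2 = w.
   Odd generators: tO j 0 = alpha_(j+1), tO j 1 = beta_(j+1), tO j 2 = gamma_(j+1). *)
Inductive term (m : nat) : Type :=
| tC : rat -> term m
| tE : 'I_3 -> term m
| tO : 'I_m -> 'I_3 -> term m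
| tAdd : term m -> term m -> term m
| tMul : term m -> term m -> term m.
Arguments tC {m}. Arguments tE {m}. Arguments tO {m}.

Definition tpow m (t : term m) (n : nat) : term m := iter n (tMul t) (tC 1).

Definition xg {m} : term m := tE (inord 0).
Definition yg {m} : term m := tE (inord 1).
Definition wg {m} : term m := tE (inord 2).

Inductive eqv (m : nat) : term m -> term m -> Prop :=
| eqv_refl t : eqv t t
| eqv_sym t u : eqv t u -> eqv u t
| eqv_trans t u v : eqv t u -> eqv u v -> eqv t v
| eqv_add t t' u u' : eqv t t' -> eqv u u' -> eqv (tAdd t u) (tAdd t' u')
| eqv_mul t t' u u' : eqv t t' -> eqv u u' -> eqv (tMul t u) (tMul t' u')
| eqv_addA t u v : eqv (tAdd t (tAdd u v)) (tAdd (tAdd t u) v)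
| eqv_addC t u : eqv (tAdd t u) (tAdd u t)
| eqv_add0 t : eqv (tAdd (tC 0) t) t
| eqv_addN t : eqv (tAdd t (tMul (tC (-1)) t)) (tC 0)
| eqv_mulA t u v : eqv (tMul t (tMul u v)) (tMul (tMul t u) v)
| eqv_mul1l t : eqv (tMul (tC 1) t) t
| eqv_mul1r t : eqv (tMul t (tC 1)) t
| eqv_mulDl t u v : eqv (tMul (tAdd t u) v) (tAdd (tMul t v) (tMul u v))
| eqv_mulDr t u v : eqv (tMul t (tAdd u v)) (tAdd (tMul t u) (tMul t v))
| eqv_CD a b : eqv (tAdd (tC a) (tC b)) (tC (a + b))
| eqv_CM a b : eqv (tMul (tC a) (tC b)) (tC (a * b))
| eqv_Ccomm a t : eqv (tMul (tC a) t) (tMul t (tC a))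
| eqv_Ecomm i t : eqv (tMul (tE i) t) (tMul t (tE i))
| eqv_Oanti j k j' k' :
    eqv (tMul (tO j k) (tO j' k')) (tMul (tC (-1)) (tMul (tO j' k') (tO j k)))
| eqv_Osq j k : eqv (tMul (tO j k) (tO j k)) (tC 0)
| eqv_J1 : eqv (tAdd xg (tAdd yg wg)) (tC 0)
| eqv_J2 : eqv (tAdd (tpow xg 2) (tAdd (tpow yg 2) (tpow wg 2))) (tC 0)
| eqv_J6 : eqv (tAdd (tpow xg 6) (tAdd (tpow yg 6) (tpow wg 6))) (tC 0)
| eqv_lin j : eqv (tAdd (tO j (inord 0)) (tAdd (tO j (inord 1)) (tO j (inord 2)))) (tC 0).

Fixpoint act m (s : {perm 'I_3}) (t : term m) : term m :=
  match t with
  | tC a => tC a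
  | tE i => tE (s i)
  | tO j k => tO j (s k)
  | tAdd t u => tAdd (act s t) (act s u)
  | tMul t u => tMul (act s t) (act s u)
  end.

Definition S3_invariant m (t : term m) : Prop := forall s : {perm 'I_3}, eqv (act s t) t.

(* alpha_I (k = 0), beta_I (k = 1), gamma_I (k = 2): ordered product over i1 < ... < ik *)
Definition oprod m (I : {set 'I_m}) (k : 'I_3) : term m :=
  foldr (fun j acc => tMul (tO j k) acc) (tC 1) [seq j <- enum 'I_m | j \in I].

Definition zgen m (i : nat) (I : {set 'I_m}) : term m :=
  tAdd (tMul (tpow xg i.-1) (oprod I (inord 0)))
       (tAdd (tMul (tpow yg i.-1) (oprod I (inord 1)))
             (tMul (tpow wg i.-1) (oprod I (inord 2)))).

Inductive in_gen (m : nat) : term m -> Prop :=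
| gen_C a : in_gen (tC a)
| gen_z (i : nat) (I : {set 'I_m}) : (1 <= i <= 6)%N -> (#|I| <= 3)%N -> in_gen (zgen i I)
| gen_add t u : in_gen t -> in_gen u -> in_gen (tAdd t u)
| gen_mul t u : in_gen t -> in_gen u -> in_gen (tMul t u).

(* Main.v *)
Require Import Defs.
From mathcomp Require Import all_boot all_order all_algebra all_fingroup.
From mathcomp Require Import zify.
From Stdlib Require Import Setoid Morphisms.
Set Implicit Arguments. Unset Strict Implicit. Unset Printing Implicit Defensive.
Import GRing.Theory Num.Theory.
Local Open Scope ring_scope.

Local Notation "a ~ b" := (eqv a b) (at level 70).
Local Notation "a +' b" := (tAdd a b) (at level 50, left associativity).
Local Notation "a *' b" := (tMul a b) (at level 40, left associativity).

Lemma eqv_equiv m : Equivalence (@eqv m).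
Proof. split; [exact: eqv_refl | exact: eqv_sym | exact: eqv_trans]. Qed.
Global Existing Instance eqv_equiv.
Global Instance tAdd_prop m : Proper (@eqv m ==> @eqv m ==> @eqv m) (@tAdd m).
Proof. by move=> ? ? H ? ? H'; apply: eqv_add. Qed.
Global Instance tMul_prop m : Proper (@eqv m ==> @eqv m ==> @eqv m) (@tMul m).
Proof. by move=> ? ? H ? ? H'; apply: eqv_mul. Qed.

#[global] Hint Resolve eqv_refl : core.

Section Infra.
Variable m : nat.
Implicit Types t u v : term m.


Lemma addr0' t : t +' tC 0 ~ t.
Proof. rewrite eqv_addC; exact: eqv_add0. Qed.
Lemma add0' t : tC 0 +' t ~ t.
Proof. exact: eqv_add0. Qed.
Lemma addA' t u v : t +' (u +' v) ~ t +' u +' v.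
Proof. exact: eqv_addA. Qed.
Lemma addC' t u : t +' u ~ u +' t.
Proof. exact: eqv_addC. Qed.
Lemma addCA' t u v : t +' (u +' v) ~ u +' (t +' v).
Proof. by rewrite addA' (addC' t u) -addA'. Qed.
Lemma addAC' t u v : t +' u +' v ~ t +' v +' u.
Proof. by rewrite -addA' (addC' u v) addA'. Qed.
Lemma addACA' t u v w : t +' u +' (v +' w) ~ t +' v +' (u +' w).
Proof. by rewrite -!addA' (addCA' u). Qed.
Lemma mulA' t u v : t *' (u *' v) ~ t *' u *' v.
Proof. exact: eqv_mulA. Qed.
Lemma mul1' t : tC 1 *' t ~ t.
Proof. exact: eqv_mul1l. Qed.
Lemma mulr1' t : t *' tC 1 ~ t.
Proof. exact: eqv_mul1r. Qed.
Lemma mulDl' t u v : (t +' u) *' v ~ t *' v +' u *' v.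
Proof. exact: eqv_mulDl. Qed.
Lemma mulDr' t u v : t *' (u +' v) ~ t *' u +' t *' v.
Proof. exact: eqv_mulDr. Qed.
Lemma CD' a b : tC a +' tC b ~ @tC m (a + b).
Proof. exact: eqv_CD. Qed.
Lemma CM' a b : tC a *' tC b ~ @tC m (a * b).
Proof. exact: eqv_CM. Qed.
Lemma Ccomm' a t : tC a *' t ~ t *' tC a.
Proof. exact: eqv_Ccomm. Qed.

Lemma addN' t : t +' tC (-1) *' t ~ tC 0.
Proof. exact: eqv_addN. Qed.

Lemma addKl' t u : tC (-1) *' t +' (t +' u) ~ u.
Proof. by rewrite addA' (addC' (tC (-1) *' t) t) addN' add0'. Qed.

Lemma add_cancel t u v : t +' u ~ t +' v -> u ~ v.
Proof. move=> H. by rewrite -(addKl' t u) H addKl'. Qed.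

Lemma mulCC' a b t : tC a *' (tC b *' t) ~ tC (a * b) *' t.
Proof. by rewrite mulA' CM'. Qed.

Lemma mulC_D a b t : tC a *' t +' tC b *' t ~ tC (a + b) *' t.
Proof. by rewrite -mulDl' CD'. Qed.

Lemma mul0' t : tC 0 *' t ~ tC 0.
Proof.
apply: (@add_cancel (tC 0 *' t)).
by rewrite mulC_D addr0 addr0'.
Qed.

Lemma mulr0' t : t *' tC 0 ~ tC 0.
Proof. by rewrite -Ccomm' mul0'. Qed.

Lemma eqC a b : a = b -> @tC m a ~ tC b.
Proof. by move->. Qed.

Lemma scale1 t : t ~ tC 1 *' t.
Proof. by rewrite mul1'. Qed.

Lemma mulCA' a t u : t *' (tC a *' u) ~ tC a *' (t *' u).
Proof. by rewrite mulA' -Ccomm' mulA'. Qed.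

Lemma mulCr' a t u : (tC a *' t) *' u ~ tC a *' (t *' u).
Proof. by rewrite mulA'. Qed.

Lemma scaleD a t u : tC a *' (t +' u) ~ tC a *' t +' tC a *' u.
Proof. exact: mulDr'. Qed.

Lemma scaleK a t : a != 0 -> tC a^-1 *' (tC a *' t) ~ t.
Proof. move=> Ha. by rewrite mulCC' mulVf // mul1'. Qed.

Definition tsum (l : seq (term m)) : term m := foldr (@tAdd m) (tC 0) l.
Definition tprod (l : seq (term m)) : term m := foldr (@tMul m) (tC 1) l.

Lemma tsum_cat l1 l2 : tsum (l1 ++ l2) ~ tsum l1 +' tsum l2.
Proof.
elim: l1 => [|x l IH] /=; first by rewrite add0'.
by rewrite IH addA'.
Qed.

Lemma tprod_cat l1 l2 : tprod (l1 ++ l2) ~ tprod l1 *' tprod l2.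
Proof.
elim: l1 => [|x l IH] /=; first by rewrite mul1'.
by rewrite IH mulA'.
Qed.

Lemma tsum_eq (T : eqType) (f g : T -> term m) (l : seq T) :
  (forall x, x \in l -> f x ~ g x) -> tsum (map f l) ~ tsum (map g l).
Proof.
elim: l => [|x l IH] //= H.
rewrite H ?mem_head // IH //.
by move=> y Hy; apply: H; rewrite in_cons Hy orbT.
Qed.

Lemma tsum_eq' (T : Type) (f g : T -> term m) l :
  (forall x, f x ~ g x) -> tsum (map f l) ~ tsum (map g l).
Proof. by move=> H; elim: l => [|x l IH] //=; rewrite H IH. Qed.

Lemma tsumD (T : Type) (f g : T -> term m) l :
  tsum [seq f x +' g x | x <- l] ~ tsum (map f l) +' tsum (map g l).
Proof.
elim: l => [|x l IH] /=; first by rewrite add0'.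
by rewrite IH addACA'.
Qed.

Lemma tsum_mull t l : t *' tsum l ~ tsum [seq t *' x | x <- l].
Proof.
elim: l => [|x l IH] /=; first by rewrite mulr0'.
by rewrite mulDr' IH.
Qed.

Lemma tsum_mulr t l : tsum l *' t ~ tsum [seq x *' t | x <- l].
Proof.
elim: l => [|x l IH] /=; first by rewrite mul0'.
by rewrite mulDl' IH.
Qed.

Lemma tsum_mull' (T : Type) (f : T -> term m) t l :
  t *' tsum (map f l) ~ tsum [seq t *' f x | x <- l].
Proof. by rewrite tsum_mull -map_comp. Qed.

Lemma tsum_mulr' (T : Type) (f : T -> term m) t l :
  tsum (map f l) *' t ~ tsum [seq f x *' t | x <- l].
Proof. by rewrite tsum_mulr -map_comp. Qed.

Lemma tsum_perm (T : eqType) (f : T -> term m) (l1 l2 : seq T) :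
  perm_eq l1 l2 -> tsum (map f l1) ~ tsum (map f l2).
Proof.
elim: l1 l2 => [|x l1 IH] l2 Hp.
  by move: Hp; rewrite perm_sym => /perm_nilP ->.
have Hx : x \in l2 by rewrite -(perm_mem Hp) mem_head.
case/splitPr: l2 / Hx Hp => a b Hp.
have Hp' : perm_eq l1 (a ++ b).
  by rewrite -(perm_cons x); apply: (perm_trans Hp); rewrite -cat1s perm_catCA.
rewrite /= (IH _ Hp') !map_cat !tsum_cat /= addCA'.
done.
Qed.

Lemma tsum_nseq n t : tsum (nseq n t) ~ tC n%:R *' t.
Proof.
elim: n => [|n IH]; first by rewrite /= mul0'.
change (t +' tsum (nseq n t) ~ tC n.+1%:R *' t).
rewrite IH; transitivity (tC 1 *' t +' tC n%:R *' t); first by rewrite mul1'.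
by rewrite mulC_D addrC natr1.
Qed.

Lemma tsum_exchange (A B : Type) (f : A -> B -> term m) l1 l2 :
  tsum [seq tsum [seq f i j | j <- l2] | i <- l1] ~
  tsum [seq tsum [seq f i j | i <- l1] | j <- l2].
Proof.
elim: l1 => [|x l1 IH] /=.
  elim: l2 => [|y l2 IH2] //=. by rewrite -IH2 add0'.
by rewrite IH -tsumD.
Qed.

Lemma tsum_filter (T : Type) (p : pred T) (f : T -> term m) l :
  tsum (map f l) ~ tsum (map f (filter p l)) +' tsum (map f (filter (predC p) l)).
Proof.
elim: l => [|x l IH] /=; first by rewrite add0'.
case: (p x) => /=; rewrite IH; first by rewrite addA'.
by rewrite addCA'.
Qed.

Lemma tsum_const (T : eqType) (f : T -> term m) (l : seq T) t :
  (forall x, x \in l -> f x ~ t) -> tsum (map f l) ~ tC (size l)%:R *' t.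
Proof.
move=> H; rewrite (tsum_eq H) -tsum_nseq.
by elim: l {H} => //= x l ->.
Qed.

End Infra.


Definition sg (p q : bool) : rat := if p && q then -1 else 1.

Lemma sgM p1 p2 q : sg (p1 (+) p2) q = sg p1 q * sg p2 q.
Proof. by case: p1; case: p2; case: q; rewrite /sg /= ?mul1r ?mulr1 ?mulrNN ?mulr1. Qed.
Lemma sgMr p q1 q2 : sg p (q1 (+) q2) = sg p q1 * sg p q2.
Proof. by case: p; case: q1; case: q2; rewrite /sg /= ?mul1r ?mulr1 ?mulrNN ?mulr1. Qed.
Lemma sgC p q : sg p q = sg q p.
Proof. by rewrite /sg andbC. Qed.
Lemma sgK p q : sg p q * sg p q = 1.
Proof. by rewrite /sg; case: (p && q); rewrite ?mulrNN mulr1. Qed.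

Section Hom.
Variable m : nat.
Implicit Types t u v : term m.

Inductive hom : bool -> term m -> Prop :=
| hC a : hom false (tC a)
| hZ p : hom p (tC 0)
| hE i : hom false (tE i)
| hO j k : hom true (tO j k)
| hAdd p t u : hom p t -> hom p u -> hom p (t +' u)
| hMul p q t u : hom p t -> hom q u -> hom (p (+) q) (t *' u).

Lemma hom_comm p q t u : hom p t -> hom q u -> t *' u ~ tC (sg p q) *' (u *' t).
Proof.
move=> Ht; elim: Ht q u => {p t}.
- move=> a q u _. by rewrite /sg /= Ccomm' mul1'.
- move=> p q u _. by rewrite mul0' mulr0' mulr0'.
- move=> i q u _. by rewrite /sg /= mul1' eqv_Ecomm.
- move=> j k q u Hu; elim: Hu => {q u}.
  + move=> a. by rewrite /sg /= mul1' Ccomm'.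
  + move=> p. by rewrite mul0' mulr0' mulr0'.
  + move=> i. by rewrite /sg /= mul1' eqv_Ecomm.
  + move=> j' k'. by rewrite /sg /= eqv_Oanti.
  + move=> p t u _ IH1 _ IH2. by rewrite mulDr' IH1 IH2 -scaleD -mulDl'.
  + move=> p q t u _ IH1 _ IH2.
    rewrite mulA' IH1 mulCr' -mulA' IH2 mulCA' mulCC' sgMr mulrC.
    by rewrite !mulA'.
- move=> p t u _ IH1 _ IH2 q v Hv.
  by rewrite mulDl' (IH1 _ _ Hv) (IH2 _ _ Hv) -scaleD -mulDr'.
- move=> p1 p2 t u _ IH1 _ IH2 q v Hv.
  rewrite -mulA' (IH2 _ _ Hv) mulCA' (mulA' t v u) (IH1 _ _ Hv) mulCr' mulCC' sgM mulrC.
  by rewrite !mulA'.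
Qed.

Lemma hom_tpow t n : hom false t -> hom false (tpow t n).
Proof.
move=> H; elim: n => [|n IH] /=; first exact: hC.
by have := hMul H IH.
Qed.

Lemma hom_tsum (T : Type) p (f : T -> term m) l :
  (forall x, hom p (f x)) -> hom p (tsum (map f l)).
Proof.
move=> H; elim: l => [|x l IH] /=; first exact: hZ.
exact: hAdd.
Qed.

Lemma hom_scale p a t : hom p t -> hom p (tC a *' t).
Proof. by move=> H; have := hMul (hC a) H. Qed.

Lemma tpowS t n : tpow t n.+1 = t *' tpow t n.
Proof. by []. Qed.

Lemma tpowD t a b : tpow t (a + b) ~ tpow t a *' tpow t b.
Proof.
elim: a => [|a IH] /=; first by rewrite mul1'.
by rewrite IH mulA'.
Qed.

Lemma act_tpow s t n : Defs.act s (tpow t n) = tpow (Defs.act s t) n.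
Proof. by elim: n => //= n ->. Qed.

Lemma act_tsum s (l : seq (term m)) : Defs.act s (tsum l) = tsum (map (Defs.act s) l).
Proof. by elim: l => //= x l ->. Qed.

Lemma act_tprod s (l : seq (term m)) : Defs.act s (tprod l) = tprod (map (Defs.act s) l).
Proof. by elim: l => //= x l ->. Qed.

Lemma enum3 : enum 'I_3 = [:: inord 0; inord 1; inord 2].
Proof.
apply: (inj_map val_inj); rewrite val_enum_ord /= !inordK //.
Qed.

Lemma ord3P (k : 'I_3) : [\/ k = inord 0, k = inord 1 | k = inord 2].
Proof.
have : k \in enum 'I_3 by rewrite mem_enum.
rewrite enum3 !inE => /or3P [] /eqP ->; [exact: Or31 | exact: Or32 | exact: Or33].
Qed.

Lemma tsum3 (f : 'I_3 -> term m) :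
  tsum (map f (enum 'I_3)) ~ f (inord 0) +' (f (inord 1) +' f (inord 2)).
Proof. by rewrite enum3 /= addr0'. Qed.

Lemma perm_enum_map (T : finType) (s : {perm T}) :
  perm_eq (map s (enum T)) (enum T).
Proof.
apply: uniq_perm; first by rewrite map_inj_uniq ?enum_uniq //; exact: perm_inj.
  exact: enum_uniq.
move=> x; rewrite mem_enum; apply/mapP; exists (s^-1 x)%g; first by rewrite mem_enum.
by rewrite permKV.
Qed.

Lemma tsum_perm_ord (T : finType) (s : {perm T}) (f : T -> term m) :
  tsum [seq f (s k) | k <- enum T] ~ tsum (map f (enum T)).
Proof.
have -> : [seq f (s k) | k <- enum T] = map f (map s (enum T)) by rewrite -map_comp.
exact: tsum_perm (perm_enum_map s).
Qed.

Lemma perm3 (s : {perm 'I_3}) (f : 'I_3 -> term m) :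
  f (s (inord 0)) +' (f (s (inord 1)) +' f (s (inord 2))) ~
  f (inord 0) +' (f (inord 1) +' f (inord 2)).
Proof.
have := tsum_perm_ord s f; rewrite enum3 /= !addr0'. done.
Qed.

Lemma act_eqv s t u : t ~ u -> Defs.act s t ~ Defs.act s u.
Proof.
elim => {t u} /=; try by (intros; econstructor; eauto).
- have := perm3 s (fun k => tE k). rewrite /xg /yg /wg => ->. exact: eqv_J1.
- rewrite /xg /yg /wg.
  have := perm3 s (fun k => tpow (tE k) 2) => /= ->. exact: eqv_J2.
- rewrite /xg /yg /wg.
  have := perm3 s (fun k => tpow (tE k) 6) => /= ->. exact: eqv_J6.
- move=> j. have := perm3 s (fun k => tO j k) => /= ->. exact: eqv_lin.
Qed.

End Hom.

Inductive ex := X of nat | K of rat | Pl of ex & ex | Ml of ex & ex.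

Definition mono := (rat * seq nat)%type.

Fixpoint nf (e : ex) : seq mono :=
  match e with
  | X i => [:: (1, [:: i])]
  | K c => [:: (c, [::])]
  | Pl a b => nf a ++ nf b
  | Ml a b => [seq (p.1 * q.1, p.2 ++ q.2) | p <- nf a, q <- nf b]
  end.

Section Ins.
Variable par : nat -> bool.
Fixpoint ins (i : nat) (w : seq nat) : rat * seq nat :=
  match w with
  | [::] => (1, [:: i])
  | j :: w' => if (i <= j)%N then (1, i :: j :: w')
               else let r := ins i w' in (r.1 * sg (par i) (par j), j :: r.2)
  end.
Definition srt (w : seq nat) : rat * seq nat :=
  foldr (fun i acc => let r := ins i acc.2 in (acc.1 * r.1, r.2)) (1, [::]) w.
Definition snf (l : seq mono) : seq mono :=
  [seq (p.1 * (srt p.2).1, (srt p.2).2) | p <- l].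
End Ins.

Definition cf (l : seq mono) (w : seq nat) : rat :=
  foldr (fun p acc => if p.2 == w then p.1 + acc else acc) 0 l.

Definition nfeq (l1 l2 : seq mono) : bool :=
  all (fun w => cf l1 w == cf l2 w) (undup (map snd (l1 ++ l2))).

Fixpoint sub (s : nat -> ex) (e : ex) : ex :=
  match e with
  | X i => s i
  | K c => K c
  | Pl a b => Pl (sub s a) (sub s b)
  | Ml a b => Ml (sub s a) (sub s b)
  end.

Section Norm.
Variable m : nat.
Variable env : nat -> term m.
Implicit Types t u v : term m.

Fixpoint ev (e : ex) : term m :=
  match e with
  | X i => env i
  | K c => tC c
  | Pl a b => ev a +' ev b
  | Ml a b => ev a *' ev b
  end.

Definition mev (p : mono) : term m := tC p.1 *' tprod (map env p.2).
Definition rf (l : seq mono) : term m := tsum (map mev l).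

Lemma rf_cat l1 l2 : rf (l1 ++ l2) ~ rf l1 +' rf l2.
Proof. by rewrite /rf map_cat tsum_cat. Qed.

Lemma mev_mul p q : mev p *' mev q ~ mev (p.1 * q.1, p.2 ++ q.2).
Proof.
rewrite /mev /= map_cat tprod_cat mulCr' mulCA' mulCC' mulA'. done.
Qed.

Lemma rf_mul l1 l2 : rf l1 *' rf l2 ~ rf [seq (p.1 * q.1, p.2 ++ q.2) | p <- l1, q <- l2].
Proof.
elim: l1 => [|p l1 IH]; first by rewrite /rf /= mul0'.
rewrite /= rf_cat -IH.
change (rf (p :: l1)) with (mev p +' rf l1).
rewrite mulDl'; apply: eqv_add => //.
rewrite /rf tsum_mull -!map_comp; apply: tsum_eq' => q /=; exact: mev_mul.
Qed.

Lemma nf_ok e : ev e ~ rf (nf e).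
Proof.
elim: e => [i|c|a IHa b IHb|a IHa b IHb] /=.
- by rewrite /rf /mev /= mul1' addr0' mulr1'.
- by rewrite /rf /mev /= addr0' mulr1'.
- by rewrite rf_cat IHa IHb.
- by rewrite IHa IHb rf_mul.
Qed.

Lemma ev_sub (s : nat -> ex) e : (forall i, env i ~ ev (s i)) -> ev e ~ ev (sub s e).
Proof.
move=> H; elim: e => [i|c|a IHa b IHb|a IHa b IHb] //=; by rewrite IHa IHb.
Qed.

Lemma tsum_zero (T : eqType) (f : T -> term m) (l : seq T) :
  (forall x, x \in l -> f x ~ tC 0) -> tsum (map f l) ~ tC 0.
Proof. by move=> H; rewrite (tsum_const H) mulr0'. Qed.

Lemma tsum_delta (T : eqType) (W : seq T) x t :
  uniq W -> x \in W -> tsum [seq if x == w then t else tC 0 | w <- W] ~ t.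
Proof.
elim: W => [|w W IH] //= /andP [HwW HW]; rewrite in_cons => /orP [/eqP Hx|Hx].
  subst w; rewrite eqxx tsum_zero ?addr0' //.
  by move=> y Hy; case: eqP => // E; subst y; rewrite Hy in HwW.
have -> : (x == w) = false by apply/eqP => E; subst w; rewrite Hx in HwW.
by rewrite IH // add0'.
Qed.

Lemma rf_coef l W : uniq W -> {subset map snd l <= W} ->
  rf l ~ tsum [seq tC (cf l w) *' tprod (map env w) | w <- W].
Proof.
move=> HW; elim: l => [|p l IH] Hs.
  by rewrite /rf /= tsum_zero // => w _; rewrite mul0'.
change (rf (p :: l)) with (mev p +' rf l).
rewrite IH; last by move=> w Hw; apply: Hs; rewrite /= in_cons Hw orbT.
have Hp : p.2 \in W by apply: Hs; rewrite /= mem_head.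
rewrite -(tsum_delta (mev p) HW Hp) -tsumD; apply: tsum_eq => w _ /=.
case: eqP => [<-|_]; last by rewrite add0'.
by rewrite /mev mulC_D.
Qed.

Variable par : nat -> bool.
Hypothesis Hsc : forall i j, env i *' env j ~ tC (sg (par i) (par j)) *' (env j *' env i).

Lemma ins_ok i w : env i *' tprod (map env w) ~
  tC (ins par i w).1 *' tprod (map env (ins par i w).2).
Proof.
elim: w => [|j w IH] /=; first by rewrite mul1'.
case: leqP => _ /=; first by rewrite mul1'.
rewrite mulA' Hsc mulCr' -mulA' IH mulCA' mulCC' mulrC. done.
Qed.

Lemma srt_ok w : tprod (map env w) ~ tC (srt par w).1 *' tprod (map env (srt par w).2).
Proof.
elim: w => [|i w IH] /=; first by rewrite mul1'.
by rewrite IH mulCA' ins_ok mulCC'.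
Qed.

Lemma snf_ok l : rf l ~ rf (snf par l).
Proof.
rewrite /rf /snf -map_comp; apply: tsum_eq' => p /=.
by rewrite /mev /= srt_ok mulCC'.
Qed.

Theorem norm_ok e1 e2 : nfeq (snf par (nf e1)) (snf par (nf e2)) -> ev e1 ~ ev e2.
Proof.
move=> H.
rewrite (nf_ok e1) (nf_ok e2) (snf_ok (nf e1)) (snf_ok (nf e2)).
set l1 := snf par (nf e1); set l2 := snf par (nf e2).
set W := undup (map snd (l1 ++ l2)).
have HW : uniq W by exact: undup_uniq.
rewrite (@rf_coef l1 W HW); last by move=> w Hw; rewrite mem_undup map_cat mem_cat Hw.
rewrite (@rf_coef l2 W HW); last by move=> w Hw; rewrite mem_undup map_cat mem_cat Hw orbT.
apply: tsum_eq => w Hw; move/allP: H => /(_ w Hw) /eqP ->. done.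
Qed.

End Norm.

Section Conf.
Variable m : nat.
Implicit Types t u v : term m.

Definition G t := exists u, in_gen u /\ u ~ t.

Lemma G_eqv t u : G t -> t ~ u -> G u.
Proof. by move=> [w [Hw H]] E; exists w; split => //; rewrite H. Qed.
Lemma G_eqv' t u : t ~ u -> G t -> G u.
Proof. by move=> E H; exact: G_eqv H E. Qed.
Lemma G_C a : G (tC a).
Proof. by exists (tC a); split => //; constructor. Qed.
Lemma G_add t u : G t -> G u -> G (t +' u).
Proof. move=> [a [Ha Ea]] [b [Hb Eb]]; exists (a +' b); split; [exact: gen_add | by rewrite Ea Eb]. Qed.
Lemma G_mul t u : G t -> G u -> G (t *' u).
Proof. move=> [a [Ha Ea]] [b [Hb Eb]]; exists (a *' b); split; [exact: gen_mul | by rewrite Ea Eb]. Qed.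
Lemma G_scale a t : G t -> G (tC a *' t).
Proof. by move=> H; apply: G_mul => //; exact: G_C. Qed.
Lemma G_tsum (T : Type) (f : T -> term m) l : (forall x, G (f x)) -> G (tsum (map f l)).
Proof. by move=> H; elim: l => [|x l IH] /=; [exact: G_C | exact: G_add]. Qed.
Lemma G_tsum_in (T : eqType) (f : T -> term m) (l : seq T) :
  (forall x, x \in l -> G (f x)) -> G (tsum (map f l)).
Proof.
elim: l => [|x l IH] H /=; first exact: G_C.
apply: G_add; first by apply: H; rewrite mem_head.
by apply: IH => y Hy; apply: H; rewrite in_cons Hy orbT.
Qed.

Lemma G_solve (n : nat) X Y Z : G Y -> G Z -> Y ~ Z +' tC n%:R *' X -> n != 0%N -> G X.
Proof.
move=> GY GZ E Hn.
have Hn' : (n%:R : rat) != 0 by rewrite pnatr_eq0.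
apply: (@G_eqv (tC (n%:R)^-1 *' (Y +' tC (-1) *' Z))).
  by apply: G_scale; apply: G_add => //; exact: G_scale.
rewrite E (addC' Z) -addA' addN' addr0'; exact: scaleK.
Qed.

Definition ty := option 'I_m.
Definition gen (k : 'I_3) (x : ty) : term m :=
  match x with None => tE k | Some j => tO j k end.
Definition tpar (x : ty) : bool := match x with None => false | Some _ => true end.
Definition P (k : 'I_3) (B : seq ty) : term m := tprod (map (gen k) B).
Definition parB (B : seq ty) : bool := foldr (fun x b => tpar x (+) b) false B.

Lemma hom_P k B : hom (parB B) (P k B).
Proof.
elim: B => [|x B IH] /=; first exact: hC.
apply: hMul => //; case: x => [j|] /=; [exact: hO | exact: hE].
Qed.

Definition cfg := seq ('I_3 * seq ty).
Definition V (c : cfg) : term m := tprod [seq P p.1 p.2 | p <- c].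
Definition parc (c : cfg) : bool := foldr (fun p b => parB p.2 (+) b) false c.
Definition actc (s : {perm 'I_3}) (c : cfg) : cfg := [seq (s p.1, p.2) | p <- c].

Lemma hom_V c : hom (parc c) (V c).
Proof. elim: c => [|p c IH] /=; [exact: hC | apply: hMul => //; exact: hom_P]. Qed.

Lemma parc_act s c : parc (actc s c) = parc c.
Proof. by elim: c => //= p c ->. Qed.

Lemma act_P s k B : Defs.act s (P k B) = P (s k) B.
Proof. by elim: B => //= x B ->; case: x. Qed.

Lemma act_V s c : Defs.act s (V c) = V (actc s c).
Proof. by elim: c => //= p c ->; rewrite act_P. Qed.

Lemma actcM s1 s2 c : actc s1 (actc s2 c) = actc (s2 * s1)%g c.
Proof. by rewrite /actc -map_comp; apply: eq_map => p /=; rewrite permM. Qed.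

Lemma actc_cat s c1 c2 : actc s (c1 ++ c2) = actc s c1 ++ actc s c2.
Proof. exact: map_cat. Qed.

Lemma V_cat c1 c2 : V (c1 ++ c2) ~ V c1 *' V c2.
Proof. by rewrite /V map_cat tprod_cat. Qed.

Lemma P_cat k B1 B2 : P k (B1 ++ B2) ~ P k B1 *' P k B2.
Proof. by rewrite /P map_cat tprod_cat. Qed.

Lemma V1 k B : V [:: (k, B)] ~ P k B.
Proof. by rewrite /V /= mulr1'. Qed.

Definition perms := enum {perm 'I_3}.
Definition Rey t := tsum [seq Defs.act s t | s <- perms].
Definition S (c : cfg) := tsum [seq V (actc s c) | s <- perms].
Definition q (B : seq ty) := tsum [seq P k B | k <- enum 'I_3].

Lemma size_perms : size perms = 6%N.
Proof. by rewrite /perms -cardE card_Sn. Qed.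

Lemma invariant_Rey t : S3_invariant t -> t ~ tC (6%:R)^-1 *' Rey t.
Proof.
move=> H; rewrite /Rey (tsum_const (t := t)); last by move=> s _; exact: H.
by rewrite size_perms scaleK.
Qed.

Lemma tsum_perms_mul (f : {perm 'I_3} -> term m) (τ : {perm 'I_3}) :
  tsum [seq f (τ * s)%g | s <- perms] ~ tsum (map f perms).
Proof.
have Hi : injective (fun s : {perm 'I_3} => (τ * s)%g) by exact: mulgI.
have := tsum_perm_ord (perm Hi) f; rewrite /perms.
have -> : [seq f (perm Hi k) | k <- enum {perm 'I_3}] = [seq f (τ * s)%g | s <- enum {perm 'I_3}].
  by apply: eq_map => s; rewrite permE.
done.
Qed.

Lemma S_act τ c : S (actc τ c) ~ S c.
Proof.
rewrite /S; have -> : [seq V (actc s (actc τ c)) | s <- perms] =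
  [seq (fun s => V (actc s c)) (τ * s)%g | s <- perms].
  by apply: eq_map => s; rewrite actcM.
exact: tsum_perms_mul.
Qed.

Lemma S_mul c B : S c *' q B ~ tsum [seq S (rcons c (k, B)) | k <- enum 'I_3].
Proof.
rewrite /S tsum_mulr'.
transitivity (tsum [seq tsum [seq V (actc s (rcons c (k, B))) | k <- enum 'I_3] | s <- perms]).
  apply: tsum_eq' => s /=.
  rewrite /q tsum_mull'.
  rewrite -(tsum_perm_ord s (fun k => V (actc s c) *' P k B)).
  apply: tsum_eq' => k /=.
  by rewrite -cats1 actc_cat V_cat /= V1.
exact: tsum_exchange.
Qed.

Lemma Vcons p c : V (p :: c) = P p.1 p.2 *' V c.
Proof. by []. Qed.

Lemma S_merge c1 k0 B1 c2 B :
  S (rcons (c1 ++ (k0, B1) :: c2) (k0, B)) ~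
  tC (sg (parB B) (parc c2)) *' S (c1 ++ (k0, B1 ++ B) :: c2).
Proof.
rewrite /S tsum_mull'; apply: tsum_eq' => s /=.
rewrite -cats1 -catA /= !actc_cat /= !actc_cat /= !V_cat !Vcons /= !V_cat V1.
rewrite (hom_comm (hom_V (actc s c2)) (hom_P (s k0) B)) parc_act sgC.
by rewrite (mulCA' _ (P (s k0) B1)) (mulCA' _ (V (actc s c1))) P_cat (mulA' (P (s k0) B1)).
Qed.

Lemma S_swap c k k' B : k \notin [seq p.1 | p <- c] -> k' \notin [seq p.1 | p <- c] ->
  S (rcons c (k, B)) ~ S (rcons c (k', B)).
Proof.
move=> Hk Hk'.
have Hc : actc (tperm k k') c = c.
  elim: c Hk Hk' => [|[x Bx] c IH] //=; rewrite !in_cons !negb_or => /andP [H1 H2] /andP [H3 H4].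
  by rewrite IH // tpermD // eq_sym.
rewrite -(S_act (tperm k k') (rcons c (k, B))).
by rewrite /actc map_rcons -/(actc _ c) Hc /= tpermL.
Qed.

End Conf.

Section Lin.
Variable m : nat.
Implicit Types t u v : term m.

Fixpoint lin t : seq (rat * cfg m) :=
  match t with
  | tC a => [:: (a, [::])]
  | tE i => [:: (1, [:: (i, [:: (None : ty m)])])]
  | tO j k => [:: (1, [:: (k, [:: Some j])])]
  | tAdd t u => lin t ++ lin u
  | tMul t u => [seq (p.1 * q.1, p.2 ++ q.2) | p <- lin t, q <- lin u]
  end.

Definition Lv (l : seq (rat * cfg m)) : term m := tsum [seq tC p.1 *' V p.2 | p <- l].

Lemma Lv_cat l1 l2 : Lv (l1 ++ l2) ~ Lv l1 +' Lv l2.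
Proof. by rewrite /Lv map_cat tsum_cat. Qed.

Lemma Lv_mul l1 l2 : Lv l1 *' Lv l2 ~ Lv [seq (p.1 * q.1, p.2 ++ q.2) | p <- l1, q <- l2].
Proof.
elim: l1 => [|p l1 IH]; first by rewrite /Lv /= mul0'.
rewrite /= Lv_cat -IH.
change (Lv (p :: l1)) with (tC p.1 *' V p.2 +' Lv l1).
rewrite mulDl'; apply: eqv_add => //.
rewrite /Lv tsum_mull' -map_comp; apply: tsum_eq' => r /=.
by rewrite V_cat mulCr' mulCA' mulCC' mulA'.
Qed.

Lemma lin_ok t : t ~ Lv (lin t).
Proof.
elim: t => [a|i|j k|t IHt u IHu|t IHt u IHu] /=.
- by rewrite /Lv /= addr0' /V /= mulr1'.
- by rewrite /Lv /= addr0' V1 /P /= mul1' mulr1'.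
- by rewrite /Lv /= addr0' V1 /P /= mul1' mulr1'.
- by rewrite Lv_cat -IHt -IHu.
- by rewrite -Lv_mul -IHt -IHu.
Qed.

Lemma Rey_eqv t u : t ~ u -> Rey t ~ Rey u.
Proof. by move=> H; apply: tsum_eq' => s; exact: act_eqv. Qed.

Lemma Rey_G t : (forall c : cfg m, G (S c)) -> G (Rey t).
Proof.
move=> HS; apply: (G_eqv' (Rey_eqv (eqv_sym (lin_ok t)))).
elim: (lin t) => [|p l IH].
  by rewrite /Rey /=; apply: G_tsum => s; exact: G_C.
rewrite /Rey /= -/(Lv l); apply: (G_eqv' (eqv_sym (tsumD _ _ _))); apply: G_add => //.
apply: (@G_eqv' _ (tC p.1 *' S p.2)); last exact: G_scale.
rewrite /S tsum_mull'; apply: tsum_eq' => s /=; by rewrite act_V.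
Qed.

Lemma S_G : (forall B : seq (ty m), G (q B)) -> forall c : cfg m, G (S c).
Proof.
move=> Hq c; move: {2}(size c) (leqnn (size c)) => n.
elim: n c => [|n IH] c.
  rewrite leqn0 => /nilP ->; rewrite /S; apply: G_tsum => s; exact: G_C.
case/lastP: c => [|c [k0 B]] Hc.
  rewrite /S; apply: G_tsum => s; exact: G_C.
rewrite size_rcons ltnS in Hc.
have Hm : forall k, k \in [seq p.1 | p <- c] -> G (S (rcons c (k, B))).
  move=> k Hk.
  have Hh : has (fun p : 'I_3 * seq (ty m) => p.1 == k) c.
    by case/mapP: Hk => p Hp ->; apply/hasP; exists p.
  set i := find (fun p : 'I_3 * seq (ty m) => p.1 == k) c.
  have Hi : (i < size c)%N by rewrite -has_find.
  set x := nth (k, [::]) c i.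
  have Hx : x.1 == k := nth_find (k, [::]) Hh.
  have Ec : c = take i c ++ (k, x.2) :: drop i.+1 c.
    by rewrite -(eqP Hx) -surjective_pairing -drop_nth // cat_take_drop.
  rewrite Ec; apply: (G_eqv' (eqv_sym (S_merge _ _ _ _ _))); apply: G_scale.
  apply: IH; move: Hc; rewrite {1}Ec !size_cat /=. done.
case: (boolP (k0 \in [seq p.1 | p <- c])) => Hin; first exact: Hm.
set N := [seq k <- enum 'I_3 | k \notin [seq p.1 | p <- c]].
apply: (@G_solve _ (size N) _ (S c *' q B)
          (tsum [seq S (rcons c (k, B)) | k <- [seq k <- enum 'I_3 | k \in [seq p.1 | p <- c]]])).
- apply: G_mul; [exact: IH | exact: Hq].
- apply: G_tsum_in => k; rewrite mem_filter => /andP [H _]; exact: Hm.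
- rewrite S_mul (tsum_filter (fun k => k \in [seq p.1 | p <- c])); apply: eqv_add => //.
  apply: tsum_const => k; rewrite mem_filter /= => /andP [Hk _]; exact: S_swap.
- have : k0 \in N by rewrite mem_filter Hin mem_enum.
  by case: N.
Qed.

End Lin.

Section Zl.
Variable m : nat.
Implicit Types t u v : term m.

Definition ltI (i j : 'I_m) : bool := (val i < val j)%N.
Lemma ltI_trans : ssrbool.transitive ltI.
Proof. by move=> x y z; rewrite /ltI; exact: ltn_trans. Qed.
Lemma ltI_irr : irreflexive ltI.
Proof. by move=> x; rewrite /ltI ltnn. Qed.

Definition thl (k : 'I_3) (L : seq 'I_m) : term m := tprod [seq tO j k | j <- L].
Definition zl (a : nat) (L : seq 'I_m) : term m :=
  tsum [seq tpow (tE k) a *' thl k L | k <- enum 'I_3].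

Lemma hom_thl k L : hom (odd (size L)) (thl k L).
Proof.
elim: L => [|j L IH] /=; first exact: hC.
by have := hMul (hO j k) IH.
Qed.

Lemma shiftE p t x y : hom false t -> hom p x -> x *' (t *' y) ~ t *' (x *' y).
Proof.
move=> Ht Hx; have H := hom_comm Hx Ht.
have E : sg p false = 1 by rewrite /sg andbF.
rewrite E in H; rewrite mulA' H mul1' mulA'. done.
Qed.

Lemma ins_sorted j L : sorted ltI L -> exists c L',
  [/\ sorted ltI L', {subset L' <= j :: L} & forall k, tO j k *' thl k L ~ tC c *' thl k L'].
Proof.
elim: L => [|i L IH] HL.
  exists 1, [:: j]; split => // k; by rewrite mul1'.
have := HL; rewrite /= (path_sortedE ltI_trans) => /andP [Hall HL0].
case: (ltngtP (val j) (val i)) => Hji.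
- exists 1, [:: j, i & L]; split => //.
    by rewrite /= {1}/ltI Hji.
  by move=> k; rewrite mul1'.
- have [c [L' [HL' Hsub HE]]] := IH HL0.
  exists (-1 * c), (i :: L'); split.
  + rewrite /= (path_sortedE ltI_trans) HL' andbT; apply/allP => x /Hsub.
    rewrite in_cons => /orP [/eqP ->//|]; by move/allP: Hall => H /H.
  + move=> x; rewrite !in_cons => /orP [->|/Hsub]; first by rewrite orbT.
    by rewrite in_cons => /orP [->|->]; rewrite ?orbT.
  + move=> k; rewrite /thl /= -/(thl k L) -/(thl k L').
    rewrite mulA' eqv_Oanti mulCr' -mulA' HE mulCA' mulCC'. done.
- have Eji : j = i by apply: val_inj.
  subst j; exists 0, [::]; split => // k.
  rewrite /thl /= mulA' eqv_Osq mul0' mul0'. done.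
Qed.

Lemma P_sorted (B : seq (ty m)) : exists c a L, sorted ltI L /\
  forall k, P k B ~ tC c *' (tpow (tE k) a *' thl k L).
Proof.
elim: B => [|x B [c [a [L [HL HE]]]]].
  exists 1, 0%N, [::]; split => // k; by rewrite /P /= /thl /= mul1' mul1'.
case: x => [j|].
- have [c' [L' [HL' _ HE']]] := ins_sorted j HL.
  exists (c * c'), a, L'; split => // k.
  rewrite /P /= -/(P k B) HE mulCA' (shiftE _ (hom_tpow a (hE m k)) (hO j k)) HE'.
  by rewrite mulCA' mulCC'.
- exists c, a.+1, L; split => // k.
  by rewrite /P /= -/(P k B) HE mulCA' (mulA' (tE k)).
Qed.

Lemma q_zl (B : seq (ty m)) : exists c a L, sorted ltI L /\ q B ~ tC c *' zl a L.
Proof.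
have [c [a [L [HL HE]]]] := P_sorted B.
exists c, a, L; split => //.
rewrite /q /zl tsum_mull'; apply: tsum_eq' => k; exact: HE.
Qed.

Lemma zl_form a L (f : 'I_3 -> term m) :
  (forall k, tpow (tE k) a *' thl k L ~ f k) -> zl a L ~ f (inord 0) +' (f (inord 1) +' f (inord 2)).
Proof. by move=> H; rewrite /zl tsum3 !H. Qed.

Lemma sorted_enumI : sorted ltI (enum 'I_m).
Proof.
have := iota_ltn_sorted 0 m; rewrite -val_enum_ord sorted_map. done.
Qed.

Lemma filter_set L : sorted ltI L -> [seq j <- enum 'I_m | j \in [set j in L]] = L.
Proof.
move=> HL; apply: (irr_sorted_eq ltI_trans ltI_irr) => //.
  exact: (sorted_filter ltI_trans _ sorted_enumI).
by move=> x; rewrite mem_filter inE mem_enum andbT.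
Qed.

Lemma zl_small a L : sorted ltI L -> (size L <= 3)%N -> (a <= 5)%N -> G (zl a L).
Proof.
move=> HL Hs Ha; exists (zgen a.+1 [set j in L]); split.
  apply: gen_z => //; rewrite cardsE; move/card_uniqP: (sorted_uniq ltI_trans ltI_irr HL) => ->.
  done.
rewrite /zgen /oprod filter_set //= /zl tsum3.
by rewrite /thl /tprod !foldr_map.
Qed.

End Zl.

Lemma norm_sub m (env : nat -> term m) par
  (Hsc : forall i j, env i *' env j ~ tC (sg (par i) (par j)) *' (env j *' env i))
  s (Hs : forall i, env i ~ ev env (s i)) e1 e2 :
  nfeq (snf par (nf (sub s e1))) (snf par (nf (sub s e2))) -> ev env e1 ~ ev env e2.
Proof.
move=> H; apply: eqv_trans (ev_sub e1 Hs) _; apply: eqv_trans (eqv_sym (ev_sub e2 Hs)).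
exact: (norm_ok Hsc H).
Qed.

Definition cube (e : ex) := Ml e (Ml e (Ml e (K 1))).
Definition sqe (e : ex) := Ml e (Ml e (K 1)).
Definition p3e := Pl (cube (X 0)) (Pl (cube (X 1)) (cube (X 2))).
Definition p2e := Pl (sqe (X 0)) (Pl (sqe (X 1)) (sqe (X 2))).
Definition E1 i := Ml (K 3%:R) (cube (X i)).
Definition E2 i := Pl p3e (Ml (K (3%:R / 2%:R)) (Ml (X i) p2e)).
Definition sigc (n : nat) : ex := if n == 2%N then Ml (K (-1)) (Pl (X 0) (X 1)) else X n.

Lemma cube_check i : (i < 3)%N ->
  nfeq (snf (fun _ => false) (nf (sub sigc (E1 i)))) (snf (fun _ => false) (nf (sub sigc (E2 i)))).
Proof. by case: i => [|[|[|]]] //= _; vm_compute. Qed.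

Section Cube.
Variable m : nat.
Implicit Types t u v : term m.

Lemma J1w : @tE m (inord 2) ~ tC (-1) *' (tE (inord 0) +' tE (inord 1)).
Proof.
apply: (@add_cancel _ (tE (inord 0) +' tE (inord 1))).
rewrite addN' -addA'; exact: eqv_J1.
Qed.

Definition envx (i : nat) : term m := tE (inord i).

Lemma cube_i i : (i < 3)%N ->
  tpow (@tE m (inord i)) 3 ~ tC (3%:R)^-1 *' zl 3 [::].
Proof.
move=> Hi.
have Hsc : forall a b, envx a *' envx b ~ tC (sg false false) *' (envx b *' envx a).
  by move=> a b; apply: hom_comm; exact: hE.
have Hs : forall n, envx n ~ ev envx (sigc n).
  by move=> n; rewrite /sigc; case: eqP => [->|] //=; exact: J1w.
have := norm_sub Hsc Hs (cube_check Hi).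
rewrite /E1 /E2 /= => H.
have J2 : ev envx p2e ~ tC 0 by exact: eqv_J2.
rewrite /= in J2; rewrite J2 mulr0' mulr0' addr0' in H.
have Z : zl 3 [::] ~ ev envx p3e.
  by apply: (@zl_form _ _ _ (fun k => tpow (tE k) 3)) => k; rewrite /thl /= mulr1'.
rewrite Z /= -H scaleK //.
Qed.

Lemma cube_k (k : 'I_3) : tpow (@tE m k) 3 ~ tC (3%:R)^-1 *' zl 3 [::].
Proof. by have [->|->|->] := ord3P k; [exact: (@cube_i 0) | exact: (@cube_i 1) | exact: (@cube_i 2)]. Qed.

Lemma zl_cube a (L : seq 'I_m) : zl (3 + a) L ~ tC (3%:R)^-1 *' (zl 3 [::] *' zl a L).
Proof.
set Z := zl 3 [::].
rewrite {1}/zl [zl a L]/zl tsum_mull' tsum_mull'; apply: tsum_eq' => k.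
by rewrite tpowD cube_k -!mulA'.
Qed.

End Cube.

Definition negx (e : ex) := Ml (K (-1)) e.
Definition Aex (k : nat) := match k with 0 => X 0 | 1 => X 1 | _ => X 9 end%N.
Definition Bex (k : nat) := match k with 0 => X 2 | 1 => X 3 | _ => X 10 end%N.
Definition Cex (k : nat) := match k with 0 => X 4 | 1 => X 5 | _ => X 11 end%N.
Definition Uex (k : nat) := X (6 + k).
Definition S3e (f : nat -> ex) := Pl (f 0%N) (Pl (f 1%N) (f 2%N)).
Definition lhs3 := Ml (K 6%:R) (S3e (fun k => Ml (Aex k) (Ml (Bex k) (Ml (Cex k) (Uex k))))).
Definition rhs3 :=
  Pl (Ml (K 2%:R) (Ml (S3e (fun k => Ml (Aex k) (Ml (Bex k) (Cex k)))) (S3e Uex)))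
  (Pl (Ml (S3e (fun k => Ml (Aex k) (Bex k))) (S3e (fun k => Ml (Cex k) (Uex k))))
  (Pl (Ml (S3e (fun k => Ml (Bex k) (Cex k))) (S3e (fun k => Ml (Aex k) (Uex k))))
      (negx (Ml (S3e (fun k => Ml (Aex k) (Cex k))) (S3e (fun k => Ml (Bex k) (Uex k))))))).
Definition sig3 (n : nat) : ex :=
  if n == 9%N then negx (Pl (X 0) (X 1)) else
  if n == 10%N then negx (Pl (X 2) (X 3)) else
  if n == 11%N then negx (Pl (X 4) (X 5)) else X n.
Definition par3 (pu : bool) (n : nat) : bool :=
  if (n < 6)%N then true else if (n < 9)%N then pu else true.

Lemma tri_check pu : nfeq (snf (par3 pu) (nf (sub sig3 lhs3))) (snf (par3 pu) (nf (sub sig3 rhs3))).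
Proof. by case: pu; vm_compute. Qed.

Section Tri.
Variable m : nat.
Implicit Types t u v : term m.

Lemma Olin (j : 'I_m) : tO j (inord 2) ~ tC (-1) *' (tO j (inord 0) +' tO j (inord 1)).
Proof.
apply: (@add_cancel _ (tO j (inord 0) +' tO j (inord 1))).
rewrite addN' -addA'; exact: eqv_lin.
Qed.

Variables (j1 j2 j3 : 'I_m) (a : nat) (L0 : seq 'I_m).

Definition u3 (k : 'I_3) := tpow (tE k) a *' thl k L0.

Definition env3 (n : nat) : term m :=
  nth (tC 0) [:: tO j1 (inord 0); tO j1 (inord 1); tO j2 (inord 0); tO j2 (inord 1);
               tO j3 (inord 0); tO j3 (inord 1); u3 (inord 0); u3 (inord 1); u3 (inord 2);
               tO j1 (inord 2); tO j2 (inord 2); tO j3 (inord 2)] n.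

Lemma hom_u3 k : hom (odd (size L0)) (u3 k).
Proof. by have := hMul (hom_tpow a (hE m k)) (hom_thl k L0). Qed.

Lemma hom_env3 n : hom (par3 (odd (size L0)) n) (env3 n).
Proof.
do 12 (case: n => [|n]; first by rewrite /env3 /par3 /=; (exact: hO || exact: hom_u3)).
by rewrite /env3 /= nth_nil; exact: hZ.
Qed.

Lemma tri_ev : ev env3 lhs3 ~ ev env3 rhs3.
Proof.
apply: (@norm_sub m env3 (par3 (odd (size L0))) _ sig3); last exact: tri_check.
  by move=> i j; apply: hom_comm; exact: hom_env3.
move=> n; rewrite /sig3.
case: eqP => [->|_]; first exact: Olin.
case: eqP => [->|_]; first exact: Olin.
case: eqP => [->|_]; first exact: Olin.
done.
Qed.

Lemma sh k j (y : term m) : tpow (tE k) a *' (tO j k *' y) ~ tO j k *' (tpow (tE k) a *' y).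
Proof. by rewrite (shiftE _ (hom_tpow a (hE m k)) (hO j k)). Qed.

Lemma tri : tC 6%:R *' zl a [:: j1, j2, j3 & L0] ~
  tC 2%:R *' (zl 0 [:: j1; j2; j3] *' zl a L0) +'
  (zl 0 [:: j1; j2] *' zl a (j3 :: L0) +'
  (zl 0 [:: j2; j3] *' zl a (j1 :: L0) +'
   tC (-1) *' (zl 0 [:: j1; j3] *' zl a (j2 :: L0)))).
Proof.
have H1 : zl a [:: j1, j2, j3 & L0] ~
   ev env3 (S3e (fun k => Ml (Aex k) (Ml (Bex k) (Ml (Cex k) (Uex k))))).
  apply: (@zl_form _ _ _ (fun k => tO j1 k *' (tO j2 k *' (tO j3 k *' u3 k)))) => k.
  by rewrite /thl /= -/(thl k L0) !sh.
have H2 : zl 0 [:: j1; j2; j3] ~ ev env3 (S3e (fun k => Ml (Aex k) (Ml (Bex k) (Cex k)))).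
  apply: (@zl_form _ _ _ (fun k => tO j1 k *' (tO j2 k *' tO j3 k))) => k.
  by rewrite /thl /= mul1' mulr1'.
have H3 : zl a L0 ~ ev env3 (S3e Uex).
  by apply: (@zl_form _ _ _ (fun k => u3 k)) => k.
have H4 : zl 0 [:: j1; j2] ~ ev env3 (S3e (fun k => Ml (Aex k) (Bex k))).
  apply: (@zl_form _ _ _ (fun k => tO j1 k *' tO j2 k)) => k.
  by rewrite /thl /= mul1' mulr1'.
have H5 : zl 0 [:: j2; j3] ~ ev env3 (S3e (fun k => Ml (Bex k) (Cex k))).
  apply: (@zl_form _ _ _ (fun k => tO j2 k *' tO j3 k)) => k.
  by rewrite /thl /= mul1' mulr1'.
have H6 : zl 0 [:: j1; j3] ~ ev env3 (S3e (fun k => Ml (Aex k) (Cex k))).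
  apply: (@zl_form _ _ _ (fun k => tO j1 k *' tO j3 k)) => k.
  by rewrite /thl /= mul1' mulr1'.
have H7 : zl a (j3 :: L0) ~ ev env3 (S3e (fun k => Ml (Cex k) (Uex k))).
  apply: (@zl_form _ _ _ (fun k => tO j3 k *' u3 k)) => k.
  by rewrite /thl /= -/(thl k L0) sh.
have H8 : zl a (j1 :: L0) ~ ev env3 (S3e (fun k => Ml (Aex k) (Uex k))).
  apply: (@zl_form _ _ _ (fun k => tO j1 k *' u3 k)) => k.
  by rewrite /thl /= -/(thl k L0) sh.
have H9 : zl a (j2 :: L0) ~ ev env3 (S3e (fun k => Ml (Bex k) (Uex k))).
  apply: (@zl_form _ _ _ (fun k => tO j2 k *' u3 k)) => k.
  by rewrite /thl /= -/(thl k L0) sh.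
rewrite H1 H2 H3 H4 H5 H6 H7 H8 H9.
exact: tri_ev.
Qed.

End Tri.

Section Fin.
Variable m : nat.
Implicit Types t u v : term m.

Lemma skip2 (x y : 'I_m) L : sorted (@ltI m) [:: x, y & L] -> sorted (@ltI m) (x :: L).
Proof.
move=> /= /andP [Hxy Hp].
have := Hp; rewrite (path_sortedE (@ltI_trans m)) => /andP [Hall HsL].
rewrite (path_sortedE (@ltI_trans m)) HsL andbT; apply/allP => z Hz.
exact: ltI_trans Hxy (allP Hall z Hz).
Qed.

Lemma zl_G_small (L : seq 'I_m) : sorted (@ltI m) L -> (size L <= 3)%N -> forall a, G (zl a L).
Proof.
move=> HL Hs a; elim: a {-2}a (leqnn a) => [|b IHb] a Ha.
  by apply: zl_small => //; rewrite leqn0 in Ha; rewrite (eqP Ha).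
case: (leqP a 5) => Ha5; first exact: zl_small.
have H3 : (3 <= a)%N by apply: leq_trans Ha5.
rewrite -(subnKC H3).
apply: (G_eqv' (eqv_sym (zl_cube _ _))); apply: G_scale; apply: G_mul.
  exact: zl_small.
apply: IHb; lia.
Qed.

Lemma zl_G n (L : seq 'I_m) a : sorted (@ltI m) L -> (size L <= n)%N -> G (zl a L).
Proof.
elim: n L a => [|n IH] L a HL Hs.
  by apply: zl_G_small => //; apply: leq_trans Hs _.
case: (leqP (size L) 3) => H3; first exact: zl_G_small.
case: L HL Hs H3 => [|j1 [|j2 [|j3 L0]]] // HL Hs H3.
have S1 : sorted (@ltI m) [:: j2, j3 & L0] := path_sorted HL.
have S2 : sorted (@ltI m) (j3 :: L0) := path_sorted S1.
have S3 : sorted (@ltI m) L0 := path_sorted S2.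
have S4 : sorted (@ltI m) (j2 :: L0) := skip2 S1.
have S5 : sorted (@ltI m) (j1 :: L0) := skip2 (skip2 HL).
have S6 := take_sorted 3 HL; rewrite /= in S6.
have S7 := take_sorted 2 HL; rewrite /= in S7.
have S8 := take_sorted 2 S1; rewrite /= in S8.
have S9 := take_sorted 2 (skip2 HL); rewrite /= in S9.
rewrite /= in Hs H3.
have IHs : forall L' b, sorted (@ltI m) L' -> (size L' <= n)%N -> G (zl b L').
  by move=> L' b; exact: IH.
apply: (@G_eqv' _ (tC (6%:R)^-1 *' (tC 6%:R *' zl a [:: j1, j2, j3 & L0]))).
  exact: scaleK.
apply: G_scale; apply: (G_eqv' (eqv_sym (tri j1 j2 j3 a L0))).
repeat apply: G_add; repeat apply: G_scale; apply: G_mul; apply: IHs => //=; move: Hs => /=; lia.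
Qed.

Lemma q_G (B : seq (ty m)) : G (q B).
Proof.
have [c [a [L [HL HE]]]] := q_zl B.
apply: (G_eqv' (eqv_sym HE)); apply: G_scale; exact: (@zl_G (size L)).
Qed.

End Fin.

Theorem lemma6p1 (m : nat) (Hm : (0 < m)%N) (t : term m) :
  S3_invariant t -> exists u : term m, in_gen u /\ eqv u t.
Proof.
move=> Hinv.
have HR : G (Rey t) := Rey_G t (S_G (@q_G m)).
apply: (G_eqv' (eqv_sym (invariant_Rey Hinv))); exact: G_scale.
Qed.
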